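(* For every $*$-term $P\land^\circ Q$ with $P\in P^*$ and $Q\in P^d$, the tree $se(P\land^\circ Q)$ has exactly one conjunction decomposition, namely $(se(P)[\mathsf T\mapsto\triangle],\,se(Q))$, and has no disjunction decomposition. For every $*$-term $P\lor^\circ Q$ with $P\in P^*$ and $Q\in P^c$, the tree $se(P\lor^\circ Q)$ has no conjunction decomposition and has exactly one disjunction decomposition, namely $(se(P)[\mathsf F\mapsto\triangle],\,se(Q))$.
   Context: Let $A$ be a nonempty set of atoms; terms are closed terms over constants $\mathsf T,\mathsf F$, atoms $a\in A$, unary $\neg$, binary $\land^\circ$, $\lor^\circ$. Evaluation trees $\mathcal T_A$: $\mathsf T,\mathsf F\in\mathcal T_A$ and $(X\unlhd a\unrhd Y)\in\mathcal T_A$ for $X,Y\in\mathcal T_A$, $a\in A$; depth $d(\mathsf T)=d(\mathsf F)=0$, $d(Y\unlhd a\unrhd Z)=1+\max(d(Y),d(Z))$. $\mathcal T_{A,\triangle}$: the same with leaves in $\{\mathsf T,\mathsf F,\triangle\}$. Leaf replacement $X[\ell_1\mapsto Y_1,\ldots]$ replaces every leaf labelled $\ell_i$ by $Y_i$. $se$: $se(\mathsf T)=\mathsf T$, $se(\mathsf F)=\mathsf F$, $se(a)=\mathsf T\unlhd a\unrhd\mathsf F$, $se(\neg P)=se(P)[\mathsf T\mapsto\mathsf F,\mathsf F\mapsto\mathsf T]$, $se(P\land^\circ Q)=se(P)[\mathsf T\mapsto se(Q)]$, $se(P\lor^\circ Q)=se(P)[\mathsf F\mapsto se(Q)]$. Syntactic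 categories ($a\in A$): $\mathsf T$-terms $P^{\mathsf T}::=\mathsf T\mid(a\land^\circ P^{\mathsf T})\lor^\circ P^{\mathsf T}$; $\mathsf F$-terms $P^{\mathsf F}::=\mathsf F\mid(a\lor^\circ P^{\mathsf F})\land^\circ P^{\mathsf F}$; $\ell$-terms $P^\ell::=(a\land^\circ P^{\mathsf T})\lor^\circ P^{\mathsf F}\mid(\neg a\land^\circ P^{\mathsf T})\lor^\circ P^{\mathsf F}$; $*$-terms $P^*::=P^c\mid P^d$, $P^c::=P^\ell\mid P^*\land^\circ P^d$, $P^d::=P^\ell\mid P^*\lor^\circ P^c$. A pair $(Y,Z)\in\mathcal T_{A,\triangle}\times\mathcal T_A$ is a candidate conjunction decomposition (ccd) of $X\in\mathcal T_A$ if $X=Y[\triangle\mapsto Z]$, $Y$ contains $\triangle$, $Y$ contains $\mathsf F$ but not $\mathsf T$, and $Z$ contains both $\mathsf T$ and $\mathsf F$; it is a candidate disjunction decomposition (cdd) if the same holds with ''$Y$ contains $\mathsf T$ but not $\mathsf F$'' instead. A ccd $(Y,Z)$ of $X$ is a conjunction decomposition (cd) if there is no other ccd $(Y',Z')$ of $X$ with $d(Z')<d(Z)$; similarly a cdd $(Y,Z)$ is a disjunction decomposition (dd) if there is no other cdd $(Y',Z')$ of $X$ with $d(Z')<d(Z)$. *)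

(* Defs.v *)
From Stdlib Require Import Arith.

Section Defs.
Variable A : Type.

(* Closed terms over T, F, atoms, negation, left-sequential conj/disj *)
Inductive term : Type :=
| tT : term
| tF : term
| tAtom : A -> term
| tNeg : term -> term
| tAnd : term -> term -> term
| tOr : term -> term -> term.

Inductive tree : Type :=
| LT : tree
| LF : tree
| LTri : tree
| Node : tree -> A -> tree -> tree.

Inductive leaf := lT | lF | lTri.

Definition leaf_tree (l : leaf) : tree :=
  match l with lT => LT | lF => LF | lTri => LTri end.

Fixpoint contains (X : tree) (l : leaf) : bool :=
  match X with
  | LT => match l with lT => true | _ => false end
  | LF => match l with lF => true | _ => false end
  | LTri => match l with lTri => true | _ => false end
  | Node Y _ Z => contains Y l || contains Z l
  end.

Definition in_TA (X : tree) : Prop := contains X lTri = false.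

Fixpoint depth (X : tree) : nat :=
  match X with
  | Node Y _ Z => S (Nat.max (depth Y) (depth Z))
  | _ => 0
  end.

Fixpoint repl (X : tree) (YT YF Ytri : tree) : tree :=
  match X with
  | LT => YT
  | LF => YF
  | LTri => Ytri
  | Node Y a Z => Node (repl Y YT YF Ytri) a (repl Z YT YF Ytri)
  end.

Definition replT X Y := repl X Y LF LTri.
Definition replF X Y := repl X LT Y LTri.
Definition replTri X Y := repl X LT LF Y.

Fixpoint se (P : term) : tree :=
  match P with
  | tT => LT
  | tF => LF
  | tAtom a => Node LT a LF
  | tNeg P => repl (se P) LF LT LTri
  | tAnd P Q => replT (se P) (se Q)
  | tOr P Q => replF (se P) (se Q)
  end.

Inductive is_Tterm : term -> Prop :=
| TtT : is_Tterm tT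
| TtCons : forall a P Q, is_Tterm P -> is_Tterm Q ->
    is_Tterm (tOr (tAnd (tAtom a) P) Q).

Inductive is_Fterm : term -> Prop :=
| FtF : is_Fterm tF
| FtCons : forall a P Q, is_Fterm P -> is_Fterm Q ->
    is_Fterm (tAnd (tOr (tAtom a) P) Q).

Inductive is_lterm : term -> Prop :=
| lt_pos : forall a P Q, is_Tterm P -> is_Fterm Q ->
    is_lterm (tOr (tAnd (tAtom a) P) Q)
| lt_neg : forall a P Q, is_Tterm P -> is_Fterm Q ->
    is_lterm (tOr (tAnd (tNeg (tAtom a)) P) Q).

Inductive is_cterm : term -> Prop :=
| c_l : forall P, is_lterm P -> is_cterm P
| c_and : forall P Q, is_starterm P -> is_dterm Q -> is_cterm (tAnd P Q)
with is_dterm : term -> Prop :=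
| d_l : forall P, is_lterm P -> is_dterm P
| d_or : forall P Q, is_starterm P -> is_cterm Q -> is_dterm (tOr P Q)
with is_starterm : term -> Prop :=
| s_c : forall P, is_cterm P -> is_starterm P
| s_d : forall P, is_dterm P -> is_starterm P.

Definition ccd (X Y Z : tree) : Prop :=
  in_TA Z /\ X = replTri Y Z /\
  contains Y lTri = true /\ contains Y lF = true /\ contains Y lT = false /\
  contains Z lT = true /\ contains Z lF = true.

Definition cdd (X Y Z : tree) : Prop :=
  in_TA Z /\ X = replTri Y Z /\
  contains Y lTri = true /\ contains Y lT = true /\ contains Y lF = false /\
  contains Z lT = true /\ contains Z lF = true.

Definition cd (X Y Z : tree) : Prop :=
  ccd X Y Z /\ ~ (exists Y' Z', ccd X Y' Z' /\ (Y', Z') <> (Y, Z) /\ depth Z' < depth Z).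

Definition dd (X Y Z : tree) : Prop :=
  cdd X Y Z /\ ~ (exists Y' Z', cdd X Y' Z' /\ (Y', Z') <> (Y, Z) /\ depth Z' < depth Z).

End Defs.

Arguments tT {A}. Arguments tF {A}. Arguments LT {A}. Arguments LF {A}. Arguments LTri {A}.
Arguments is_starterm {A} _. Arguments is_cterm {A} _. Arguments is_dterm {A} _.
Arguments is_Tterm {A} _. Arguments is_Fterm {A} _. Arguments is_lterm {A} _.
Arguments se {A} _. Arguments replT {A} _ _. Arguments replF {A} _ _. Arguments replTri {A} _ _.
Arguments repl {A} _ _ _ _. Arguments contains {A} _ _. Arguments depth {A} _. Arguments in_TA {A} _.
Arguments ccd {A} _ _ _. Arguments cdd {A} _ _ _. Arguments cd {A} _ _ _. Arguments dd {A} _ _ _.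
Arguments tAtom {A} _. Arguments tNeg {A} _. Arguments tAnd {A} _ _. Arguments tOr {A} _ _.
Arguments Node {A} _ _ _.

(* Main.v *)
Require Import Defs.
From Stdlib Require Import Arith Lia Bool.

Ltac bc :=
  repeat match goal with H : @eq bool ?x ?y |- _ => match type of H with context[contains _ _] => revert H end end; simpl;
  repeat match goal with |- context[contains ?X ?l] => destruct (contains X l) end;
  simpl; intros; try discriminate; try congruence; auto.
Ltac bcrush := repeat split; bc.

Lemma contains_repl {A} (X a b c : tree A) l :
  contains (repl X a b c) l = (contains X lT && contains a l) || (contains X lF && contains b l)
     || (contains X lTri && contains c l).
Proof.
  induction X; destruct l; simpl; try rewrite IHX1, IHX2; bc.
Qed.

Lemma repl_id {A} (X : tree A) : repl X LT LF LTri = X.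
Proof. induction X; simpl; congruence. Qed.

Lemma repl_absT {A} (X a a' b c : tree A) : contains X lT = false -> repl X a b c = repl X a' b c.
Proof. induction X; simpl; intros; try discriminate; auto.
  apply orb_false_iff in H as [H1 H2]; rewrite IHX1, IHX2; auto. Qed.
Lemma repl_absF {A} (X a b b' c : tree A) : contains X lF = false -> repl X a b c = repl X a b' c.
Proof. induction X; simpl; intros; try discriminate; auto.
  apply orb_false_iff in H as [H1 H2]; rewrite IHX1, IHX2; auto. Qed.
Lemma repl_absTri {A} (X a b c c' : tree A) : contains X lTri = false -> repl X a b c = repl X a b c'.
Proof. induction X; simpl; intros; try discriminate; auto.
  apply orb_false_iff in H as [H1 H2]; rewrite IHX1, IHX2; auto. Qed.

Lemma repl_repl {A} (X a b c d e f : tree A) :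
  repl (repl X a b c) d e f = repl X (repl a d e f) (repl b d e f) (repl c d e f).
Proof. induction X; simpl; congruence. Qed.

Definition sel {A} (l : leaf) (a b c : tree A) := match l with lT => a | lF => b | lTri => c end.

Lemma depth_repl_le {A} (X a b c : tree A) l :
  contains X l = true -> depth (sel l a b c) <= depth (repl X a b c).
Proof.
  induction X; destruct l; simpl; intros; try discriminate; try lia;
  destruct (orb_prop _ _ H) as [H'|H']; 
  [specialize (IHX1 H')|specialize (IHX2 H')|specialize (IHX1 H')|specialize (IHX2 H')
  |specialize (IHX1 H')|specialize (IHX2 H')]; simpl in *; lia.
Qed.

Lemma depth_repl_lt {A} (X1 X2 a b c : tree A) x l :
  contains (Node X1 x X2) l = true -> depth (sel l a b c) < depth (repl (Node X1 x X2) a b c).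
Proof.
  simpl; intros H; destruct (orb_prop _ _ H) as [H'|H'];
  [pose proof (depth_repl_le X1 a b c l H')|pose proof (depth_repl_le X2 a b c l H')]; lia.
Qed.

Lemma fix_repl {A} (U Z : tree A) : repl U Z LF LTri = Z -> contains Z lT = true -> U = LT.
Proof.
  intros H HZ. destruct U; auto.
  - simpl in H; subst; discriminate.
  - simpl in H; subst; discriminate.
  - rename a into t. destruct (contains (Node U1 t U2) lT) eqn:E.
    + pose proof (depth_repl_lt U1 U2 Z LF LTri t lT E). simpl sel in H0. rewrite H in H0. lia.
    + rewrite (repl_absT _ _ LT) in H by exact E. rewrite repl_id in H. subst. simpl in *. congruence.
Qed.

Lemma replT_inj {A} (S U Z : tree A) : contains Z lT = true ->
  repl S Z LF LTri = repl U Z LF LTri -> S = U.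
Proof.
  intros HZ. revert U; induction S; intros U H.
  - symmetry; apply (fix_repl U Z); auto.
  - destruct U; simpl in H; try congruence; subst; discriminate.
  - destruct U; simpl in H; try congruence; subst; discriminate.
  - destruct U.
    + rename a into t. assert (H' : repl (Node S1 t S2) Z LF LTri = Z) by exact H.
      apply fix_repl in H'; auto; discriminate.
    + discriminate.
    + discriminate.
    + simpl in H; injection H as H1 H2 H3; f_equal; auto.
Qed.

Definition Tdec {A} (X : tree A) := exists W Z', contains W lT = false /\ W <> LTri /\
  contains W lTri = true /\ in_TA Z' /\ contains Z' lT = true /\ contains Z' lF = true /\ X = replTri W Z'.
Definition Fdec {A} (X : tree A) := exists W Z', contains W lF = false /\ W <> LTri /\
  contains W lTri = true /\ in_TA Z' /\ contains Z' lT = true /\ contains Z' lF = true /\ X = replTri W Z'.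
Definition PureDec {A} (X : tree A) := exists W Z', contains W lT = false /\ contains W lF = false /\
  W <> LTri /\ contains W lTri = true /\ in_TA Z' /\ contains Z' lT = true /\ contains Z' lF = true /\
  X = replTri W Z'.

Lemma Lmain {A} (S Z Y Z' : tree A) : contains Z lT = true -> ~ Tdec Z -> in_TA Z' ->
  contains Z' lT = true -> contains Z' lF = true -> contains Y lT = false ->
  repl S Z LF LTri = repl Y LT LF Z' ->
  (Y = repl S LTri LF LTri /\ Z' = Z) \/ depth Z < depth Z' \/ (contains S lT = false /\ Y = S).
Proof.
  intros HZT HnT HZ' HZ'T HZ'F. revert Y. induction S; intros Y HY H.
  - simpl in H. destruct Y.
    + discriminate.
    + subst; discriminate.
    + left; split; auto.
    + rename a into y. destruct (contains (Node Y1 y Y2) lTri) eqn:E.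
      * exfalso; apply HnT; exists (Node Y1 y Y2), Z'; repeat split; auto; discriminate.
      * rewrite (repl_absTri _ _ _ _ LTri) in H by exact E. rewrite repl_id in H. subst.
        congruence.
  - simpl in H. destruct Y; simpl in H; try discriminate.
    + right; right; auto.
    + subst; discriminate.
  - simpl in H. destruct Y; simpl in H; try discriminate. subst; discriminate.
  - rename a into s. destruct Y.
    + discriminate.
    + discriminate.
    + change (repl (Node S1 s S2) Z LF LTri = Z') in H.
      destruct (contains (Node S1 s S2) lT) eqn:E.
      * right; left. rewrite <- H. exact (depth_repl_lt S1 S2 Z LF LTri s lT E).
      * rewrite (repl_absT _ _ LT) in H by exact E. rewrite repl_id in H. subst.
        congruence.
    + simpl in H. injection H as H1 Hs H2. subst. simpl in HY.
      apply orb_false_iff in HY as [HY1 HY2].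
      destruct (IHS1 _ HY1 H1) as [[E1 E1']|[D1|[T1 E1]]];
      destruct (IHS2 _ HY2 H2) as [[E2 E2']|[D2|[T2 E2]]]; subst; simpl;
        try (right; left; assumption).
      * left; auto.
      * left; split; auto. f_equal. rewrite (repl_absT _ _ LT) by exact T2. rewrite repl_id; auto.
      * left; split; auto. f_equal. rewrite (repl_absT _ _ LT) by exact T1. rewrite repl_id; auto.
      * right; right. rewrite T1, T2. auto.
Qed.

Lemma step1 {A} (S Z W Z' : tree A) : contains W lF = false -> contains Z' lT = true ->
  contains S lF = true -> repl S Z LF LTri = repl W LT LF Z' ->
  exists U, contains U lT = true /\ Z' = repl U Z LF LTri.
Proof.
  revert W. induction S; intros W HW HZ' HS H.
  - discriminate.
  - destruct W; simpl in *; try discriminate. subst; discriminate.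
  - discriminate.
  - rename a into s. destruct W.
    + discriminate.
    + discriminate.
    + change (repl (Node S1 s S2) Z LF LTri = Z') in H.
      exists (Node S1 s S2); split; auto.
      rewrite <- H, contains_repl in HZ'. simpl in HZ'. revert HZ'. bc.
    + simpl in H. injection H as H1 Hs H2. simpl in HW, HS.
      apply orb_false_iff in HW as [HW1 HW2].
      destruct (contains S1 lF) eqn:E1.
      * apply (IHS1 W1); auto.
      * apply (IHS2 W2); auto.
Qed.

Lemma step2 {A} (S Z W U : tree A) : contains Z lT = true -> contains Z lF = true ->
  contains U lT = true -> contains W lF = false ->
  repl S Z LF LTri = repl W LT LF (repl U Z LF LTri) ->
  contains W lT = false /\ S = repl W LT LF U.
Proof.
  intros HZT HZF HU. revert W. induction S; intros W HW H.
  - change (Z = repl W LT LF (repl U Z LF LTri)) in H. destruct W.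
    + simpl in H; subst; discriminate.
    + discriminate.
    + simpl in H. symmetry in H. apply fix_repl in H; [subst; split; reflexivity | auto].
    + rename a into w. destruct (contains (Node W1 w W2) lTri) eqn:E.
      * pose proof (depth_repl_lt W1 W2 LT LF (repl U Z LF LTri) w lTri E) as d1.
        pose proof (depth_repl_le U Z LF LTri lT HU) as d2. simpl sel in *.
        rewrite <- H in d1. lia.
      * rewrite (repl_absTri _ _ _ _ LTri) in H by exact E. rewrite repl_id in H.
        subst. congruence.
  - destruct W; simpl in H; try discriminate.
    assert (C := f_equal (fun t => contains t lT) H). simpl in C.
    rewrite contains_repl in C. revert C. bc.
  - destruct W; simpl in H; try discriminate.
    assert (C := f_equal (fun t => contains t lT) H). simpl in C.
    rewrite contains_repl in C. revert C. bc.
  - rename a into s. destruct W.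
    + discriminate.
    + discriminate.
    + change (repl (Node S1 s S2) Z LF LTri = repl U Z LF LTri) in H.
      apply replT_inj in H; auto.
    + simpl in H. injection H as H1 Hs H2. simpl in HW.
      apply orb_false_iff in HW as [HW1 HW2].
      destruct (IHS1 _ HW1 H1), (IHS2 _ HW2 H2). subst. simpl. rewrite H, H3. auto.
Qed.

Lemma core {A} (S Z : tree A) : in_TA S -> in_TA Z -> contains S lF = true ->
  contains Z lT = true -> contains Z lF = true -> ~ PureDec S -> ~ Fdec (replT S Z).
Proof.
  intros HS HZ HSF HZT HZF HnP [W [Z' (HWF & HWne & HWtri & HZ'tri & HZ'T & HZ'F & HX)]].
  destruct (step1 S Z W Z' HWF HZ'T HSF HX) as [U [HU HZ'eq]]. subst Z'.
  destruct (step2 S Z W U HZT HZF HU HWF HX) as [HWT HSeq].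
  apply HnP. exists W, U. unfold in_TA in *. repeat split; auto.
  - rewrite contains_repl in HZ'tri. revert HZ'tri. bc.
  - rewrite HSeq, contains_repl in HSF. revert HSF. bc.
Qed.

Lemma canon_ccd {A} (S Z : tree A) : in_TA S -> in_TA Z -> contains S lT = true ->
  contains S lF = true -> contains Z lT = true -> contains Z lF = true ->
  ccd (replT S Z) (replT S LTri) Z.
Proof.
  intros HS HZ HST HSF HZT HZF. unfold ccd, in_TA, replT, replTri in *.
  repeat split; auto.
  - rewrite repl_repl. simpl. apply repl_absTri; auto.
  - rewrite contains_repl; simpl; rewrite HST; auto.
  - rewrite contains_repl; simpl; rewrite HSF; bc.
  - rewrite contains_repl; simpl; rewrite HS; bc.
Qed.

Lemma AT_conj {A} (S Z : tree A) : in_TA S -> in_TA Z -> contains S lT = true ->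
  contains S lF = true -> contains Z lT = true -> contains Z lF = true -> ~ Tdec Z ->
  ~ Fdec (replT S Z) ->
  (forall Y Z0, cd (replT S Z) Y Z0 <-> (Y = replT S LTri /\ Z0 = Z)) /\
  (forall Y Z0, ~ dd (replT S Z) Y Z0).
Proof.
  intros HS HZ HST HSF HZT HZF HnT HnF. split.
  - intros Y Z0; split.
    + intros [Hc Hmin]. destruct Hc as (h1&h2&h3&h4&h5&h6&h7).
      destruct (Lmain S Z Y Z0 HZT HnT h1 h6 h7 h5 h2) as [C|[D|[E _]]].
      * exact C.
      * exfalso; apply Hmin. exists (replT S LTri), Z. split; [apply canon_ccd; auto|].
        split; auto. intro Heq; injection Heq; intros; subst; lia.
      * congruence.
    + intros [-> ->]. split; [apply canon_ccd; auto|].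
      intros (Y'&Z'&Hc&Hne&Hlt). destruct Hc as (h1&h2&h3&h4&h5&h6&h7).
      destruct (Lmain S Z Y' Z' HZT HnT h1 h6 h7 h5 h2) as [[-> ->]|[D|[E _]]].
      * apply Hne; reflexivity.
      * lia.
      * congruence.
  - intros Y Z0 [Hc _]. apply HnF. destruct Hc as (h1&h2&h3&h4&h5&h6&h7).
    exists Y, Z0; repeat split; auto. intro; subst; discriminate.
Qed.

Fixpoint flip {A} (X : tree A) : tree A :=
  match X with LT => LF | LF => LT | LTri => LTri | Node Y a Z => Node (flip Y) a (flip Z) end.
Definition fl (l : leaf) := match l with lT => lF | lF => lT | lTri => lTri end.

Lemma flip_flip {A} (X : tree A) : flip (flip X) = X.
Proof. induction X; simpl; congruence. Qed.
Lemma flip_inj {A} (X Y : tree A) : flip X = flip Y -> X = Y.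
Proof. intro H. rewrite <- (flip_flip X), <- (flip_flip Y), H. reflexivity. Qed.
Lemma contains_flip {A} (X : tree A) l : contains (flip X) l = contains X (fl l).
Proof. induction X; destruct l; simpl; try rewrite IHX1, IHX2; reflexivity. Qed.
Lemma depth_flip {A} (X : tree A) : depth (flip X) = depth X.
Proof. induction X; simpl; congruence. Qed.
Lemma flip_repl {A} (X a b c : tree A) : flip (repl X a b c) = repl X (flip a) (flip b) (flip c).
Proof. induction X; simpl; congruence. Qed.
Lemma repl_flip {A} (X a b c : tree A) : repl (flip X) a b c = repl X b a c.
Proof. induction X; simpl; congruence. Qed.
Lemma flip_replTri {A} (W U : tree A) : flip (replTri W U) = replTri (flip W) (flip U).
Proof. unfold replTri. rewrite flip_repl, repl_flip. reflexivity. Qed.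
Lemma flip_replF {A} (S Z : tree A) : flip (replF S Z) = replT (flip S) (flip Z).
Proof. unfold replF, replT. rewrite flip_repl, repl_flip. reflexivity. Qed.
Lemma flip_ne {A} (W : tree A) : W <> LTri -> flip W <> LTri.
Proof. destruct W; simpl; intros H E; try discriminate; auto. Qed.

Lemma Tdec_flip {A} (X : tree A) : Tdec X -> Fdec (flip X).
Proof.
  intros [W [Z' (h1&h2&h3&h4&h5&h6&h7)]]. exists (flip W), (flip Z'). unfold in_TA in *.
  rewrite !contains_flip, h7, flip_replTri. simpl. repeat split; auto. apply flip_ne; auto.
Qed.
Lemma Fdec_flip {A} (X : tree A) : Fdec X -> Tdec (flip X).
Proof.
  intros [W [Z' (h1&h2&h3&h4&h5&h6&h7)]]. exists (flip W), (flip Z'). unfold in_TA in *.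
  rewrite !contains_flip, h7, flip_replTri. simpl. repeat split; auto. apply flip_ne; auto.
Qed.
Lemma PureDec_flip {A} (X : tree A) : PureDec X -> PureDec (flip X).
Proof.
  intros [W [Z' (h0&h1&h2&h3&h4&h5&h6&h7)]]. exists (flip W), (flip Z'). unfold in_TA in *.
  rewrite !contains_flip, h7, flip_replTri. simpl. repeat split; auto. apply flip_ne; auto.
Qed.

Lemma cdd_flip {A} (X Y Z : tree A) : cdd X Y Z -> ccd (flip X) (flip Y) (flip Z).
Proof.
  intros (h1&h2&h3&h4&h5&h6&h7). unfold ccd, in_TA in *.
  rewrite !contains_flip, h2, flip_replTri. simpl. repeat split; auto.
Qed.
Lemma ccd_flip {A} (X Y Z : tree A) : ccd X Y Z -> cdd (flip X) (flip Y) (flip Z).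
Proof.
  intros (h1&h2&h3&h4&h5&h6&h7). unfold cdd, in_TA in *.
  rewrite !contains_flip, h2, flip_replTri. simpl. repeat split; auto.
Qed.

Lemma dd_cd {A} (X Y Z : tree A) : dd X Y Z <-> cd (flip X) (flip Y) (flip Z).
Proof.
  split.
  - intros [Hc Hm]. split; [apply cdd_flip; auto|].
    intros (Y'&Z'&Hc'&Hne&Hlt). apply Hm. exists (flip Y'), (flip Z').
    split; [rewrite <- (flip_flip X); apply ccd_flip; auto|].
    split; [|rewrite depth_flip in *; auto].
    intro E; injection E; intros E1 E2; apply Hne; rewrite <- E1, <- E2, !flip_flip; auto.
  - intros [Hc Hm]. split; [rewrite <- (flip_flip X), <- (flip_flip Y), <- (flip_flip Z);
      apply ccd_flip; auto|].
    intros (Y'&Z'&Hc'&Hne&Hlt). apply Hm. exists (flip Y'), (flip Z').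
    split; [apply cdd_flip; auto|].
    split; [|rewrite !depth_flip; auto].
    intro E; injection E; intros E1 E2; apply Hne.
    apply flip_inj in E1; apply flip_inj in E2; subst; auto.
Qed.

Lemma core_or {A} (S Z : tree A) : in_TA S -> in_TA Z -> contains S lT = true ->
  contains Z lT = true -> contains Z lF = true -> ~ PureDec S -> ~ Tdec (replF S Z).
Proof.
  intros HS HZ HST HZT HZF HnP HT. apply Tdec_flip in HT. rewrite flip_replF in HT.
  revert HT. unfold in_TA in *. apply core; unfold in_TA; rewrite ?contains_flip; simpl; auto.
  intro HP. apply PureDec_flip in HP. rewrite flip_flip in HP. auto.
Qed.

Lemma AT_disj {A} (S Z : tree A) : in_TA S -> in_TA Z -> contains S lT = true ->
  contains S lF = true -> contains Z lT = true -> contains Z lF = true -> ~ Fdec Z ->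
  ~ PureDec S ->
  (forall Y Z0, ~ cd (replF S Z) Y Z0) /\
  (forall Y Z0, dd (replF S Z) Y Z0 <-> (Y = replF S LTri /\ Z0 = Z)).
Proof.
  intros HS HZ HST HSF HZT HZF HnF HnP.
  assert (HnT : ~ Tdec (replF S Z)) by (apply core_or; auto).
  destruct (AT_conj (flip S) (flip Z)) as [Hcd _]; unfold in_TA in *;
    rewrite ?contains_flip; simpl; auto.
  - intro HT; apply Tdec_flip in HT; rewrite flip_flip in HT; auto.
  - rewrite <- flip_replF. intro HF. apply Fdec_flip in HF. rewrite flip_flip in HF; auto.
  - split.
    + intros Y Z0 [Hc _]. apply HnT. destruct Hc as (h1&h2&h3&h4&h5&h6&h7).
      exists Y, Z0; repeat split; auto. intro; subst; discriminate.
    + intros Y Z0. rewrite dd_cd, flip_replF, Hcd. split.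
      * intros [E1 E2]. split; apply flip_inj; auto.
        rewrite E1. unfold replF, replT. rewrite flip_repl, repl_flip. reflexivity.
      * intros [-> ->]. split; auto.
        unfold replF, replT. rewrite flip_repl, repl_flip. reflexivity.
Qed.

Lemma Tterm_prop {A} (P : term A) : is_Tterm P ->
  contains (se P) lTri = false /\ contains (se P) lT = true /\ contains (se P) lF = false.
Proof.
  induction 1 as [|a P Q HP IHP HQ IHQ]; [simpl; auto|].
  destruct IHP as (p1&p2&p3), IHQ as (q1&q2&q3).
  change (se (tOr (tAnd (tAtom a) P) Q)) with (Node (repl (se P) LT (se Q) LTri) a (se Q)).
  simpl. rewrite !contains_repl. bcrush.
Qed.

Lemma Fterm_prop {A} (P : term A) : is_Fterm P ->
  contains (se P) lTri = false /\ contains (se P) lT = false /\ contains (se P) lF = true.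
Proof.
  induction 1 as [|a P Q HP IHP HQ IHQ]; [simpl; auto|].
  destruct IHP as (p1&p2&p3), IHQ as (q1&q2&q3).
  change (se (tAnd (tOr (tAtom a) P) Q)) with (Node (se Q) a (repl (se P) (se Q) LF LTri)).
  simpl. rewrite !contains_repl. bcrush.
Qed.

Ltac kill_dec :=
  let W := fresh "W" in let Z' := fresh "Z'" in
  intros [W [Z' (h1&h2&h3&h4&h5&h6&h7)]]; unfold in_TA, replTri in *;
  destruct W; simpl in h7; try discriminate;
  [ exact (h2 eq_refl) |
    injection h7 as e1 e2 e3; subst; rewrite ?contains_repl in *; simpl in *; bc ].

Lemma node_nodec {A} (B1 B2 : tree A) a :
  contains B1 lT = true -> contains B1 lF = false -> contains B1 lTri = false ->
  contains B2 lT = false -> contains B2 lF = true -> contains B2 lTri = false ->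
  ~ Tdec (Node B1 a B2) /\ ~ Fdec (Node B1 a B2) /\ ~ Tdec (Node B2 a B1) /\ ~ Fdec (Node B2 a B1).
Proof.
  intros. repeat split; kill_dec.
Qed.

Definition Good {A} (X : tree A) := in_TA X /\ contains X lT = true /\ contains X lF = true.

Lemma lterm_prop {A} (P : term A) : is_lterm P -> Good (se P) /\ ~ Tdec (se P) /\ ~ Fdec (se P).
Proof.
  intros [a P' Q HP HQ|a P' Q HP HQ];
  destruct (Tterm_prop P' HP) as (p1&p2&p3); destruct (Fterm_prop Q HQ) as (q1&q2&q3).
  - change (se (tOr (tAnd (tAtom a) P') Q)) with (Node (repl (se P') LT (se Q) LTri) a (se Q)).
    destruct (node_nodec (repl (se P') LT (se Q) LTri) (se Q) a) as (n1&n2&n3&n4);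
      try solve [rewrite ?contains_repl; bc].
    unfold Good, in_TA; simpl; rewrite !contains_repl; split; [bcrush|auto].
  - change (se (tOr (tAnd (tNeg (tAtom a)) P') Q)) with (Node (se Q) a (repl (se P') LT (se Q) LTri)).
    destruct (node_nodec (repl (se P') LT (se Q) LTri) (se Q) a) as (n1&n2&n3&n4);
      try solve [rewrite ?contains_repl; bc].
    unfold Good, in_TA; simpl; rewrite !contains_repl; split; [bcrush|auto].
Qed.

Scheme c_mut := Induction for is_cterm Sort Prop
with d_mut := Induction for is_dterm Sort Prop
with s_mut := Induction for is_starterm Sort Prop.

Combined Scheme all_mut from c_mut, d_mut, s_mut.

Lemma PureDec_F {A} (X : tree A) : PureDec X -> Fdec X.
Proof. intros [W [Z' (h0&h1&h2&h3&h4&h5&h6&h7)]]. exists W, Z'; repeat split; auto. Qed.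
Lemma PureDec_T {A} (X : tree A) : PureDec X -> Tdec X.
Proof. intros [W [Z' (h0&h1&h2&h3&h4&h5&h6&h7)]]. exists W, Z'; repeat split; auto. Qed.

Lemma all_prop {A : Type} :
  (forall P : term A, is_cterm P -> Good (se P) /\ ~ Fdec (se P)) /\
  (forall P : term A, is_dterm P -> Good (se P) /\ ~ Tdec (se P)) /\
  (forall P : term A, is_starterm P -> Good (se P) /\ ~ PureDec (se P)).
Proof.
  apply (all_mut A (fun P _ => Good (se P) /\ ~ Fdec (se P))
                   (fun P _ => Good (se P) /\ ~ Tdec (se P))
                   (fun P _ => Good (se P) /\ ~ PureDec (se P))).
  - intros P HP. destruct (lterm_prop P HP) as (?&?&?). auto.
  - intros P Q _ [(p1&p2&p3) pn] _ [(q1&q2&q3) qn].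
    change (se (tAnd P Q)) with (repl (se P) (se Q) LF LTri).
    split; [|apply core; auto].
    unfold Good, in_TA in *. rewrite !contains_repl. bcrush.
  - intros P HP. destruct (lterm_prop P HP) as (?&?&?). auto.
  - intros P Q _ [(p1&p2&p3) pn] _ [(q1&q2&q3) qn].
    change (se (tOr P Q)) with (repl (se P) LT (se Q) LTri).
    split; [|apply core_or; auto].
    unfold Good, in_TA in *. rewrite !contains_repl. bcrush.
  - intros P _ [g n]. split; auto. intro H; apply n, PureDec_F; auto.
  - intros P _ [g n]. split; auto. intro H; apply n, PureDec_T; auto.
Qed.

Theorem theorem3p6 (A : Type) :
  (forall P Q : term A, is_starterm P -> is_dterm Q ->
     let X := se (tAnd P Q) in
     (forall Y Z, cd X Y Z <-> (Y = replT (se P) LTri /\ Z = se Q)) /\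
     (forall Y Z, ~ dd X Y Z)) /\
  (forall P Q : term A, is_starterm P -> is_cterm Q ->
     let X := se (tOr P Q) in
     (forall Y Z, ~ cd X Y Z) /\
     (forall Y Z, dd X Y Z <-> (Y = replF (se P) LTri /\ Z = se Q))).
Proof.
  destruct (@all_prop A) as (Hc & Hd & Hs). split.
  - intros P Q HP HQ X. unfold X.
    destruct (Hs P HP) as [(p1&p2&p3) pn]. destruct (Hd Q HQ) as [(q1&q2&q3) qn].
    change (se (tAnd P Q)) with (replT (se P) (se Q)).
    apply AT_conj; auto. apply core; auto.
  - intros P Q HP HQ X. unfold X.
    destruct (Hs P HP) as [(p1&p2&p3) pn]. destruct (Hc Q HQ) as [(q1&q2&q3) qn].
    change (se (tOr P Q)) with (replF (se P) (se Q)).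
    apply AT_disj; auto.
Qed.
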